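(* Let $D_{act} > 0$ be the duration of an activity period and $D_{sleep} \ge 0$ the duration of the sleep period, so that a duty cycle has duration $D_{act}+D_{sleep}$, and define the capacity $C_{RTXP} = \left\lfloor \frac{D_{act}+D_{sleep}}{D_{act}} \right\rfloor$. Let $n \in \mathbb{N}$ be a hop-count and let $p \in \mathbb{N}$ be the number of packets present in a 2-hop neighborhood of nodes at hop-count $n$ at the start of a duty cycle. Assume packets can be lost only through collisions, that coordinates are unique in every 2-hop neighborhood and the backoff function is bijective. If $p < C_{RTXP}$, then every one of these $p$ packets reaches a node at hop-count $n-1$ within at most one duty-cycle period.
   Context: Protocol model (RTXP): nodes are globally synchronized and duty-cycled. Each duty cycle consists of a sequence of activity periods, each of duration $D_{act}$, followed by sleeping, the total duty-cycle duration being $D_{act}+D_{sleep}$. In each activity period, nodes at hop-count $n$ (distance in hops to the sink) holding a packet contend for the channel in a backoff phase: each node's backoff time is $f(c)$ where $c$ is its virtual coordinate and $f$ a fixed function; the node whose backoff timer expires first sends a jamming code and wins; nodes detecting a jamming code earlier lose (2-hop interference model: nodes detect jamming codes of all nodes within two hops). The winner transmits its packet, which is received by neighbors at hop-count $n-1$, one of which forwards it. A node that loses the contention may request a further (secondary) activity period immediately following the current one, so that contention is repeated in successive activity periods until the end of the duty cycle. Thus in each activity period one packet in a 2-hop neighborhood wins the contention and makes one hop, and a duty cycle contains at most $C_{RTXP}$ activity periods. *)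

(* Defs.v *)
From Stdlib Require Import Reals Lra Lia ZArith Arith List.
Import ListNotations.
Open Scope R_scope.

Definition capacity (Dact Dsleep : R) : nat :=
  Z.to_nat (Int_part ((Dact + Dsleep) / Dact)).

Definition bijectiveR (f : R -> R) : Prop :=
  (forall x y, f x = f y -> x = y) /\ (forall y, exists x, f x = y).

(* Outcome of a packet during the duty cycle: delivered (made one hop, i.e.
   received by the nodes at hop-count n-1) during activity period k, or lost
   (collision) during activity period k. Activity periods are numbered from 0. *)
Inductive outcome : Type :=
| Delivered (k : nat)
| Lost (k : nat).

Definition backoff (f : R -> R) (coord : nat -> R) (holder : nat -> nat) (i : nat) : R :=
  f (coord (holder i)).

Definition min_backoff (bo : nat -> R) (l : list nat) : R :=
  match l with
  | [] => 0
  | i :: l' => fold_right (fun j m => Rmin (bo j) m) (bo i) l'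
  end.

Definition contenders (bo : nat -> R) (l : list nat) : list nat :=
  filter (fun i => if Req_EM_T (bo i) (min_backoff bo l) then true else false) l.

(* Run the contention over successive activity periods.
   [fuel] = remaining activity periods in the duty cycle, [k] = index of the
   current activity period, [l] = packets still pending in the 2-hop
   neighborhood.  In each period the node(s) with the earliest backoff win;
   if they are a single node, it transmits one of its packets (one hop),
   otherwise the simultaneous jamming codes collide and the contenders'
   packets are lost. *)
Fixpoint run (bo : nat -> R) (holder : nat -> nat) (fuel k : nat) (l : list nat)
  : list (nat * outcome) :=
  match fuel with
  | O => []
  | S fuel' =>
    match contenders bo l with
    | [] => []
    | w :: ws =>
      if forallb (fun j => Nat.eqb (holder j) (holder w)) ws
      then (w, Delivered k) :: run bo holder fuel' (S k) (filter (fun j => negb (Nat.eqb j w)) l)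
      else map (fun j => (j, Lost k)) (w :: ws)
           ++ run bo holder fuel' (S k)
                (filter (fun j => negb (existsb (Nat.eqb j) (w :: ws))) l)
    end
  end.

(* Main.v *)
Require Import Defs.
From Stdlib Require Import Reals Lra Lia ZArith Arith List.
Open Scope R_scope.

Section Aux.
Variable bo : nat -> R.
Variable holder : nat -> nat.
Variable P : nat -> Prop.
Hypothesis HP : forall a b, P a -> P b -> bo a = bo b -> holder a = holder b.

Lemma fold_min_props (a : R) (l : list nat) :
  let m := fold_right (fun j m => Rmin (bo j) m) a l in
  m <= a /\ (forall j, In j l -> m <= bo j) /\ (m = a \/ exists j, In j l /\ bo j = m).
Proof.
  induction l as [|x l IH]; simpl.
  - split; [lra|]. split; [tauto|]. now left.
  - destruct IH as [H1 [H2 H3]].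
    set (m0 := fold_right (fun j m => Rmin (bo j) m) a l) in *.
    split; [pose proof (Rmin_r (bo x) m0); lra|].
    split.
    + intros j [<-|Hj]; [apply Rmin_l|].
      pose proof (Rmin_r (bo x) m0); pose proof (H2 j Hj); lra.
    + apply Rmin_case.
      * right. exists x. auto.
      * destruct H3 as [H3|[j [Hj Hb]]]; [now left|]. right; exists j; auto.
Qed.

Lemma min_props (l : list nat) : l <> nil ->
  (forall j, In j l -> min_backoff bo l <= bo j) /\
  exists j, In j l /\ bo j = min_backoff bo l.
Proof.
  destruct l as [|i l']; [congruence|]. intros _. simpl.
  destruct (fold_min_props (bo i) l') as [H1 [H2 H3]].
  split.
  - intros j [<-|Hj]; auto.
  - destruct H3 as [H3|[j [Hj Hb]]].
    + exists i; auto.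
    + exists j; auto.
Qed.

Lemma contenders_In l w : In w (contenders bo l) -> In w l /\ bo w = min_backoff bo l.
Proof.
  unfold contenders. intro H. apply filter_In in H. destruct H as [H1 H2].
  destruct (Req_EM_T _ _); [auto|discriminate].
Qed.

Lemma contenders_ne l : l <> nil -> contenders bo l <> nil.
Proof.
  intros Hl. destruct (min_props l Hl) as [_ [j [Hj Hb]]].
  intro E. assert (In j (contenders bo l)).
  { unfold contenders. apply filter_In. split; auto.
    destruct (Req_EM_T _ _); [auto|congruence]. }
  rewrite E in H. inversion H.
Qed.

Lemma filter_len_lt w l : In w l ->
  (length (filter (fun j => negb (Nat.eqb j w)) l) < length l)%nat.
Proof.
  induction l as [|x l IH]; simpl; [tauto|].
  intros [<-|H].
  - rewrite Nat.eqb_refl. simpl.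
    assert (forall l0, length (filter (fun j => negb (Nat.eqb j x)) l0) <= length l0)%nat.
    { induction l0; simpl; [lia|]. destruct (negb _); simpl; lia. }
    specialize (H l). lia.
  - specialize (IH H). destruct (negb _); simpl; lia.
Qed.

Lemma run_delivers fuel : forall k0 l i,
  (forall j, In j l -> P j) -> (length l <= fuel)%nat -> In i l ->
  exists k, In (i, Delivered k) (run bo holder fuel k0 l) /\ (k0 <= k < k0 + length l)%nat.
Proof.
  induction fuel as [|fuel IH]; intros k0 l i HPl Hlen Hi.
  - destruct l; simpl in *; [tauto|lia].
  - simpl.
    assert (Hne : l <> nil) by (intro; subst; inversion Hi).
    pose proof (contenders_ne l Hne) as Hc.
    destruct (contenders bo l) as [|w ws] eqn:E; [congruence|].
    assert (Hw : In w l /\ bo w = min_backoff bo l)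
      by (apply contenders_In; rewrite E; left; auto).
    assert (Hall : forallb (fun j => Nat.eqb (holder j) (holder w)) ws = true).
    { apply forallb_forall. intros j Hj.
      assert (Hj' : In j l /\ bo j = min_backoff bo l)
        by (apply contenders_In; rewrite E; right; auto).
      apply Nat.eqb_eq. apply HP; try apply HPl; try tauto.
      destruct Hj', Hw; congruence. }
    rewrite Hall.
    destruct (Nat.eq_dec i w) as [->|Hiw].
    + exists k0. split; [left; auto|]. destruct l; [congruence|simpl; lia].
    + set (l' := filter (fun j => negb (Nat.eqb j w)) l).
      pose proof (filter_len_lt w l (proj1 Hw)) as Hlt. fold l' in Hlt.
      assert (Hi' : In i l').
      { unfold l'. apply filter_In. split; auto.
        destruct (Nat.eqb_spec i w); [congruence|auto]. }
      destruct (IH (S k0) l' i) as [k [Hk1 Hk2]]; auto.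
      * intros j Hj. apply HPl. unfold l' in Hj. apply filter_In in Hj. tauto.
      * lia.
      * exists k. split; [right; auto|]. lia.
Qed.
End Aux.

Theorem mainTheorem2
  (Dact Dsleep : R) (n p : nat)
  (hop : nat -> nat) (holder : nat -> nat) (coord : nat -> R) (f : R -> R) :
  0 < Dact -> 0 <= Dsleep ->
  (* the p packets are held by nodes at hop-count n *)
  (forall i, (i < p)%nat -> hop (holder i) = n) ->
  (* coordinates are unique in the 2-hop neighborhood *)
  (forall a b, In a (map holder (seq 0 p)) -> In b (map holder (seq 0 p)) ->
     a <> b -> coord a <> coord b) ->
  (* the backoff function is bijective *)
  bijectiveR f ->
  (p < capacity Dact Dsleep)%nat ->
  forall i, (i < p)%nat ->
    exists k : nat,
      In (i, Delivered k)
         (run (backoff f coord holder) holder (capacity Dact Dsleep) 0 (seq 0 p))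
      /\ INR (S k) * Dact <= Dact + Dsleep.
Proof.
  intros HD HS _ Hco [Hinj _] Hcap i Hi.
  destruct (run_delivers (backoff f coord holder) holder (fun j => (j < p)%nat))
    with (fuel := capacity Dact Dsleep) (k0 := 0%nat) (l := seq 0 p) (i := i)
    as [k [Hk1 Hk2]].
  - intros a b Ha Hb Hab. unfold backoff in Hab. apply Hinj in Hab.
    destruct (Nat.eq_dec (holder a) (holder b)) as [e|ne]; auto.
    exfalso.
    assert (Ha' : In a (seq 0 p)) by (apply in_seq; simpl in *; lia).
    assert (Hb' : In b (seq 0 p)) by (apply in_seq; simpl in *; lia).
    apply (Hco _ _ (in_map holder _ a Ha') (in_map holder _ b Hb') ne Hab).
  - intros j Hj. apply in_seq in Hj. lia.
  - rewrite length_seq. lia.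
  - apply in_seq. lia.
  - exists k. split; auto.
    rewrite length_seq in Hk2.
    unfold capacity in Hcap.
    set (x := (Dact + Dsleep) / Dact) in *.
    destruct (base_Int_part x) as [Hb1 _].
    assert (Hz : (Z.of_nat (S k) <= Int_part x)%Z) by lia.
    apply IZR_le in Hz. rewrite <- INR_IZR_INZ in Hz.
    assert (Hx : x * Dact = Dact + Dsleep) by (unfold x; field; lra).
    rewrite <- Hx. apply Rmult_le_compat_r; lra.
Qed.
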